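(* For every $\mu\in\mathbb{R}$, the Sprott vector field satisfies on $\mathbb{R}^3\setminus\Delta$ $$-0.41\rho-w-\tfrac{\sqrt3}{2}\le d\theta(f_\mu)\le0.41\rho-w-\tfrac{\sqrt3}{2},$$ where $w:=(x+y+z)/\sqrt3$ and $\rho:=\|\mathbf{x}_\perp\|$.
   Context: The Sprott vector field $f_\mu$ on $\mathbb{R}^3$ is $\dot x=y^2-z-\mu x$, $\dot y=z^2-x-\mu y$, $\dot z=x^2-y-\mu z$. $\Delta:=\mathrm{span}\{(1,1,1)\}$; $\mathbf{x}_\perp$ is the orthogonal projection of $\mathbf{x}=(x,y,z)$ onto $\Delta^\perp$, with $\|\mathbf{x}_\perp\|^2=\tfrac23(x^2+y^2+z^2-xy-yz-zx)$; $d\theta:=\frac{1}{\sqrt3}\frac{(z-y)dx+(x-z)dy+(y-x)dz}{\|\mathbf{x}_\perp\|^2}$ on $\mathbb{R}^3\setminus\Delta$. *)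

(* Defs.v *)
From Stdlib Require Import Reals.
Open Scope R_scope.

Definition sprott_x (mu x y z : R) : R := y ^ 2 - z - mu * x.
Definition sprott_y (mu x y z : R) : R := z ^ 2 - x - mu * y.
Definition sprott_z (mu x y z : R) : R := x ^ 2 - y - mu * z.

Definition on_diag (x y z : R) : Prop := x = y /\ y = z.

(* ||x_perp||^2 *)
Definition perp_sq (x y z : R) : R :=
  2 / 3 * (x ^ 2 + y ^ 2 + z ^ 2 - x * y - y * z - z * x).

Definition rho (x y z : R) : R := sqrt (perp_sq x y z).

Definition wcoord (x y z : R) : R := (x + y + z) / sqrt 3.

(* the 1-form d theta at (x,y,z) applied to a vector (vx,vy,vz) *)
Definition dtheta (x y z vx vy vz : R) : R :=
  / sqrt 3 * (((z - y) * vx + (x - z) * vy + (y - x) * vz) / perp_sq x y z).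

Definition dtheta_f (mu x y z : R) : R :=
  dtheta x y z (sprott_x mu x y z) (sprott_y mu x y z) (sprott_z mu x y z).

(* Main.v *)
Require Import Defs.
From Stdlib Require Import Reals Lra Psatz.
Open Scope R_scope.

Theorem lemma9 (mu x y z : R) (hx : ~ on_diag x y z) :
  - (41 / 100) * rho x y z - wcoord x y z - sqrt 3 / 2 <= dtheta_f mu x y z /\
  dtheta_f mu x y z <= (41 / 100) * rho x y z - wcoord x y z - sqrt 3 / 2.
Proof.
  set (P := perp_sq x y z).
  assert (HP : 0 < P).
  { unfold P, perp_sq.
    assert (H : x - y <> 0 \/ y - z <> 0).
    { destruct (Req_dec x y); destruct (Req_dec y z); try (left; lra); try (right; lra).
      exfalso; apply hx; split; auto. }
    assert (x ^ 2 + y ^ 2 + z ^ 2 - x * y - y * z - z * x =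
            ((x-y)^2 + (y-z)^2 + (z-x)^2)/2) by field.
    rewrite H0.
    destruct H as [H|H]; assert (0 < (if true then 0 else 0) + 1) by lra; pose proof (pow2_ge_0 (y-z));
      pose proof (pow2_ge_0 (x-y)); pose proof (pow2_ge_0 (z-x)); nra. }
  set (q := sqrt 3).
  assert (Hq : 0 < q) by (apply sqrt_lt_R0; lra).
  assert (Hq2 : q * q = 3) by (apply sqrt_sqrt; lra).
  set (r := rho x y z).
  assert (Hr : 0 < r) by (apply sqrt_lt_R0; exact HP).
  assert (Hr2 : r * r = P) by (apply sqrt_sqrt; lra).
  set (E := x^2*y+y^2*z+z^2*x-(x^3+y^3+z^3)/3-2*x*y*z).
  assert (HN : (z - y) * sprott_x mu x y z + (x - z) * sprott_y mu x y z + (y - x) * sprott_z mu x y z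
     = -(3/2) * P - (x+y+z) * P + E).
  { unfold sprott_x, sprott_y, sprott_z, E, P, perp_sq. field. }
  assert (Hd : dtheta_f mu x y z = - wcoord x y z - q/2 + E / (q * P)).
  { unfold dtheta_f, dtheta, wcoord. fold q. fold P. rewrite HN.
    replace (q/2) with (3/2/q) by (rewrite <- Hq2; field; lra).
    field. split; lra. }
  assert (HE : E^2 <= P^3/2).
  { assert (H27 : 27 * (P^3/2 - E^2) =
      ((x-z)^3 + 3*(x-z)^2*(y-z) - 6*(x-z)*(y-z)^2 + (y-z)^3)^2).
    { unfold P, perp_sq, E. field. }
    pose proof (pow2_ge_0 ((x-z)^3 + 3*(x-z)^2*(y-z) - 6*(x-z)*(y-z)^2 + (y-z)^3)).
    lra. }
  assert (HB : Rabs E <= 41/100 * q * r^3).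
  { assert (0 < r^3) by (apply pow_lt; lra).
    rewrite <- (Rabs_right (41/100*q*r^3)) by nra.
    apply Rsqr_le_abs_0.
    unfold Rsqr.
    assert (P^3 = r^6) by (rewrite <- Hr2; ring).
    assert (0 <= r^6) by (apply pow_le; lra).
    replace (41 / 100 * q * r ^ 3 * (41 / 100 * q * r ^ 3)) with
      (41/100*41/100 * (q*q) * r^6) by field.
    rewrite Hq2. simpl in HE |- *. nra. }
  assert (HB2 : - (41/100 * q * r^3) <= E <= 41/100 * q * r^3).
  { unfold Rabs in HB. destruct (Rcase_abs E); lra. }
  assert (HqP : 0 < q * P) by nra.
  assert (Hr3 : 41/100 * q * r^3 = (41/100 * r) * (q * P)) by (rewrite <- Hr2; ring).
  rewrite Hr3 in HB2.
  assert (HEt : E = E / (q*P) * (q*P)) by (field; lra).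
  rewrite HEt in HB2.
  destruct HB2 as [HB2a HB2b].
  apply Rmult_le_reg_r in HB2b; [|exact HqP].
  assert (HB2a' : (- (41/100*r)) * (q*P) <= E / (q*P) * (q*P)) by lra.
  apply Rmult_le_reg_r in HB2a'; [|exact HqP].
  rewrite Hd. fold r. split; lra.
Qed.
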